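(* Let $S$ be a finite (possibly empty) set of rational primes. Then the action of $\Gamma_S$ on $\mathfrak{X}_S$ is vertex transitive: for every vertex $v$ of $\mathfrak{X}_S$ there is $\gamma\in\Gamma_S$ with $\gamma\, v_0 = v$. Consequently the action of $\overline{\Gamma}_S$ on $\mathfrak{X}_S$ is vertex transitive as well.
   Context: Let $\mathcal{H}$ be the quaternion algebra over $\mathbb{Q}$ with basis $1, I, J, IJ$ and relations $I^2=J^2=-1$, $IJ=-JI$, with reduced norm $\mathrm{Nm}(a+bI+cJ+dIJ)=a^2+b^2+c^2+d^2$. Let $\mathcal{O}$ be the Hurwitz order, the $\mathbb{Z}$-span of $1, I, J, \tfrac12(1+I+J+IJ)$. For a finite set $S$ of primes, let $\mathbb{Z}_S=\mathbb{Z}[1/p : p\in S]$, $m_S=\prod_{p\in S}p$, $\mathcal{O}_S=\mathcal{O}\otimes_{\mathbb{Z}}\mathbb{Z}_S$, $\Gamma_S=\mathcal{O}_S^*$ (the $S$-unit group), and $\overline{\Gamma}_S=\Gamma_S/\mathbb{Z}_S^*$ (units modulo central scalars). For each odd prime $p$ fix an isomorphism $\mathcal{H}\otimes_{\mathbb{Q}}\mathbb{Q}_p\cong \mathrm{M}_2(\mathbb{Q}_p)$ carrying $\mathcal{O}\otimes_{\mathbb{Z}}\mathbb{Z}_p$ onto $\mathrm{M}_2(\mathbb{Z}_p)$; let $\mathfrak{X}_p$ be the Bruhat–Tits tree of $\mathrm{PGL}_2(\mathbb{Q}_p)$ (vertices are homothety classes of $\mathbb{Z}_p$-lattices in $\mathbb{Q}_p^2$,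 two classes adjacent when representatives $L'\subset L$ satisfy $L/L'\cong \mathbb{Z}/p$), on which $\Gamma_S$ acts through $\mathcal{H}^*\subset \mathrm{GL}_2(\mathbb{Q}_p)$, and let $v_{0,p}$ be the class of $\mathbb{Z}_p\oplus\mathbb{Z}_p$. For $p=2$, let $\mathfrak{X}_2$ be a single point $v_{0,2}$ with trivial action. Put $\mathfrak{X}_S=\prod_{p\in S}\mathfrak{X}_p$ with the diagonal action of $\Gamma_S$ (scalars act trivially, so $\overline{\Gamma}_S$ acts); a vertex of $\mathfrak{X}_S$ is a tuple of vertices of the factors, and $v_0=(v_{0,p})_{p\in S}$. *)

(* Defs.v *)
From HB Require Import structures.
From mathcomp Require Import all_boot all_order all_algebra.
Set Implicit Arguments. Unset Strict Implicit. Unset Printing Implicit Defensive.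
Import Order.TTheory GRing.Theory Num.Theory.
Local Open Scope ring_scope.

Record quat := Quat { q0 : rat; q1 : rat; q2 : rat; q3 : rat }.

Definition qadd (a b : quat) : quat :=
  Quat (q0 a + q0 b) (q1 a + q1 b) (q2 a + q2 b) (q3 a + q3 b).
Definition qscale (r : rat) (a : quat) : quat :=
  Quat (r * q0 a) (r * q1 a) (r * q2 a) (r * q3 a).
(* Hamilton product: I^2 = J^2 = -1, IJ = -JI *)
Definition qmul (a b : quat) : quat :=
  Quat (q0 a * q0 b - q1 a * q1 b - q2 a * q2 b - q3 a * q3 b)
       (q0 a * q1 b + q1 a * q0 b + q2 a * q3 b - q3 a * q2 b)
       (q0 a * q2 b - q1 a * q3 b + q2 a * q0 b + q3 a * q1 b)
       (q0 a * q3 b + q1 a * q2 b - q2 a * q1 b + q3 a * q0 b).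
Definition qone : quat := Quat 1 0 0 0.
Definition qI : quat := Quat 0 1 0 0.
Definition qJ : quat := Quat 0 0 1 0.
Definition qIJ : quat := qmul qI qJ.
Definition qnorm (a : quat) : rat := q0 a ^+ 2 + q1 a ^+ 2 + q2 a ^+ 2 + q3 a ^+ 2.
Definition qomega : quat :=
  qscale (2%:R)^-1 (qadd (qadd qone qI) (qadd qJ qIJ)).

Definition qcomb (a b c d : rat) : quat :=
  qadd (qadd (qscale a qone) (qscale b qI)) (qadd (qscale c qJ) (qscale d qomega)).

Definition in_O (x : quat) : Prop :=
  exists a b c d : int, x = qcomb a%:~R b%:~R c%:~R d%:~R.

Definition mS (S : seq nat) : nat := \prod_(p <- S) p.
Definition in_ZS (S : seq nat) (r : rat) : Prop :=
  exists (k : nat) (z : int), r = z%:~R / ((mS S ^ k)%N)%:R.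

(* O_S = O (x)_Z Z_S, i.e. the Z_S-span of the Z-basis 1, I, J, omega of O *)
Definition in_OS (S : seq nat) (x : quat) : Prop :=
  exists a b c d : rat, [/\ in_ZS S a, in_ZS S b, in_ZS S c & in_ZS S d] /\
    x = qcomb a b c d.

Definition in_Gamma (S : seq nat) (x : quat) : Prop :=
  in_OS S x /\ exists y, in_OS S y /\ qmul x y = qone /\ qmul y x = qone.

(* ---------- Q_p, axiomatically ----------
   (K, R) is a field K with a subring R such that R is a complete discrete
   valuation ring with uniformizer p and residue field Z/p.  Such a pair is
   isomorphic to (Q_p, Z_p) (unique up to unique isomorphism). *)
Definition padic_field (p : nat) (K : fieldType) (R : K -> Prop) : Prop :=
  [/\ R 1 /\ (forall x y, R x -> R y -> R (x - y)) /\ (forall x y, R x -> R y -> R (x * y)),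
      (p%:R : K) != 0 /\ ~ R (p%:R)^-1,
      (forall x : K, x != 0 -> exists (k : int) (u : K), [/\ R u, R u^-1 & x = (p%:R) ^ k * u]),
      (forall x, R x -> exists n : nat, R ((x - n%:R) / p%:R)) &
      (forall s : nat -> K, (forall n, R (s n)) ->
         (forall n, R ((s n.+1 - s n) / (p%:R ^+ n))) ->
         exists x, forall n, R ((x - s n) / (p%:R ^+ n)))].

Definition Rmx (K : fieldType) (R : K -> Prop) m n (A : 'M[K]_(m, n)) : Prop :=
  forall i j, R (A i j).

(* iota : H -> M_2(K) is the restriction to H of an isomorphism
   H (x) Q_p ~= M_2(Q_p) carrying O (x) Z_p onto M_2(Z_p): a unital ring
   homomorphism (hence Q-linear) such that the K-linear extension maps the
   R-span of the Z-basis 1, I, J, omega of O onto M_2(R). *)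
Definition split_iso (K : fieldType) (R : K -> Prop) (iota : quat -> 'M[K]_2) : Prop :=
  [/\ iota qone = 1,
      (forall x y, iota (qadd x y) = iota x + iota y),
      (forall x y, iota (qmul x y) = iota x * iota y),
      (forall x, in_O x -> Rmx R (iota x)) &
      (forall M : 'M[K]_2, Rmx R M ->
         exists a b c d, [/\ R a, R b, R c & R d] /\
           M = a *: iota qone + b *: iota qI + c *: iota qJ + d *: iota qomega)].

Definition lattice_of (K : fieldType) (R : K -> Prop) (g : 'M[K]_2) : 'cV[K]_2 -> Prop :=
  fun v => exists u : 'cV[K]_2, Rmx R u /\ v = g *m u.

Definition is_lattice (K : fieldType) (R : K -> Prop) (L : 'cV[K]_2 -> Prop) : Prop :=
  exists g : 'M[K]_2, g \in unitmx /\ forall v, L v <-> lattice_of R g v.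

(* standard lattice R^2, representing v_{0,p} *)
Definition std_lattice (K : fieldType) (R : K -> Prop) := lattice_of R 1.

Definition mx_image (K : fieldType) (A : 'M[K]_2) (L : 'cV[K]_2 -> Prop) : 'cV[K]_2 -> Prop :=
  fun v => exists w, L w /\ v = A *m w.

(* same vertex of the tree = homothetic lattices *)
Definition homothetic (K : fieldType) (L L' : 'cV[K]_2 -> Prop) : Prop :=
  exists c : K, c != 0 /\ forall v, L' v <-> exists w, L w /\ v = c *: w.

(* Main.v *)
Require Import Defs.
From HB Require Import structures.
From mathcomp Require Import all_boot all_order all_algebra.
From mathcomp Require Import ring lra.
From Stdlib Require Import Classical IndefiniteDescription.
Import Order.TTheory GRing.Theory Num.Theory.
Local Open Scope ring_scope.

Definition qzero := Quat 0 0 0 0.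
Definition qneg x := Quat (- q0 x) (- q1 x) (- q2 x) (- q3 x).
Definition qsub x y := qadd x (qneg y).
Definition qconj x := Quat (q0 x) (- q1 x) (- q2 x) (- q3 x).
Definition hq (a b c d : int) : quat :=
  Quat (a%:~R + d%:~R / 2) (b%:~R + d%:~R/2) (c%:~R + d%:~R/2) (d%:~R/2).
Definition qrat (r : rat) := Quat r 0 0 0.

Lemma qcombE a b c d : qcomb a b c d = Quat (a + d/2) (b + d/2) (c+d/2) (d/2).
Proof. rewrite /qcomb /qomega /qIJ /qadd /qscale /qmul /qone /qI /qJ /=; by by congr Quat; field. Qed.

Lemma in_OP x : in_O x <-> exists a b c d : int, x = hq a b c d.
Proof. by split; move=> [a [b [c [d ->]]]]; exists a, b, c, d; rewrite qcombE. Qed.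

Ltac qdes := repeat match goal with |- forall x : quat, _ => let a := fresh in let b := fresh in let c := fresh in let d := fresh in case=> a b c d end.

Lemma qmulA a b c : qmul a (qmul b c) = qmul (qmul a b) c.
Proof. move: a b c; qdes; rewrite /qmul /=; congr Quat; ring. Qed.
Lemma qmulDr a b c : qmul a (qadd b c) = qadd (qmul a b) (qmul a c).
Proof. move: a b c; qdes; rewrite /qmul /qadd /=; congr Quat; ring. Qed.
Lemma qmulBr a b c : qmul a (qsub b c) = qsub (qmul a b) (qmul a c).
Proof. move: a b c; qdes; rewrite /qmul /qsub /qneg /qadd /=; congr Quat; ring. Qed.
Lemma qnormM a b : qnorm (qmul a b) = qnorm a * qnorm b.
Proof. move: a b; qdes; rewrite /qmul /qnorm /=; ring. Qed.
Lemma qmul_conj a : qmul a (qconj a) = qrat (qnorm a).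
Proof. move: a; qdes; rewrite /qmul /qconj /qnorm /qrat /=; congr Quat; ring. Qed.
Lemma qconj_mul a : qmul (qconj a) a = qrat (qnorm a).
Proof. move: a; qdes; rewrite /qmul /qconj /qnorm /qrat /=; congr Quat; ring. Qed.
Lemma qscale_mul r a b : qmul a (qscale r b) = qscale r (qmul a b).
Proof. move: a b; qdes; rewrite /qmul /qscale /=; congr Quat; ring. Qed.
Lemma qscale_mull r a b : qmul (qscale r a) b = qscale r (qmul a b).
Proof. move: a b; qdes; rewrite /qmul /qscale /=; congr Quat; ring. Qed.
Lemma qscaleA r s a : qscale r (qscale s a) = qscale (r * s) a.
Proof. move: a; qdes; rewrite /qscale /=; congr Quat; ring. Qed.
Lemma qscale_rat r a : qscale r a = qmul (qrat r) a.
Proof. move: a; qdes; rewrite /qmul /qscale /qrat /=; congr Quat; ring. Qed.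
Lemma qscale1 a : qscale 1 a = a.
Proof. move: a; qdes; rewrite /qscale /=; congr Quat; ring. Qed.
Lemma qsub_add a b : qadd (qsub a b) b = a.
Proof. move: a b; qdes; rewrite /qsub /qneg /qadd /=; congr Quat; ring. Qed.
Lemma qrat_mul r s : qmul (qrat r) (qrat s) = qrat (r * s).
Proof. rewrite /qmul /qrat /=; congr Quat; ring. Qed.

Lemma qnorm_ge0 a : 0 <= qnorm a.
Proof. case: a => a b c d; rewrite /qnorm /=; nra. Qed.

Lemma qnorm_eq0 a : qnorm a = 0 -> a = qzero.
Proof.
case: a => a b c d; rewrite /qnorm /qzero /= => h.
have ha : a = 0 by apply/eqP; rewrite -sqrf_eq0; apply/eqP; nra.
have hb : b = 0 by apply/eqP; rewrite -sqrf_eq0; apply/eqP; nra.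
have hc : c = 0 by apply/eqP; rewrite -sqrf_eq0; apply/eqP; nra.
have hd : d = 0 by apply/eqP; rewrite -sqrf_eq0; apply/eqP; nra.
by rewrite ha hb hc hd.
Qed.

Lemma in_O_add x y : in_O x -> in_O y -> in_O (qadd x y).
Proof.
move=> /in_OP [a [b [c [d ->]]]] /in_OP [a' [b' [c' [d' ->]]]]; apply/in_OP.
exists (a + a'), (b + b'), (c + c'), (d + d'); rewrite /hq /qadd /=; by by congr Quat; field.
Qed.
Lemma in_O_neg x : in_O x -> in_O (qneg x).
Proof.
move=> /in_OP [a [b [c [d ->]]]]; apply/in_OP.
exists (- a), (- b), (- c), (- d); rewrite /hq /qneg /=; by by congr Quat; field.
Qed.
Lemma in_O_sub x y : in_O x -> in_O y -> in_O (qsub x y).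
Proof. by move=> hx hy; apply: in_O_add => //; apply: in_O_neg. Qed.
Lemma in_O_conj x : in_O x -> in_O (qconj x).
Proof.
move=> /in_OP [a [b [c [d ->]]]]; apply/in_OP.
exists (a + d), (- b), (- c), (- d); rewrite /hq /qconj /=; by by congr Quat; field.
Qed.
Lemma in_O_mul x y : in_O x -> in_O y -> in_O (qmul x y).
Proof.
move=> /in_OP [a [b [c [d ->]]]] /in_OP [a2 [b2 [c2 [d2 ->]]]]; apply/in_OP.
exists (a * a2 - b * b2 - b * d2 - c * c2 - c2 * d - d * d2 - b * c2 + b2 * c),
  (a * b2 + b2 * d + a2 * b + c * d2 - c2 * d - b * c2 + b2 * c),
  (a * c2 - b * d2 + a2 * c + c * d2 + b2 * d - b * c2 + b2 * c),
  (a * d2 + d * d2 + 2 * b * c2 + b * d2 + c2 * d + a2 * d - 2 * b2 * c - c * d2 - b2 * d).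
rewrite /hq /qmul /=; by congr Quat; field.
Qed.
Lemma in_O_int (z : int) : in_O (qrat z%:~R).
Proof. apply/in_OP; exists z, 0, 0, 0; rewrite /hq /qrat /=; by by congr Quat; field. Qed.

Lemma qnorm_nat x : in_O x -> exists n : nat, qnorm x = n%:R.
Proof.
move=> /in_OP [a [b [c [d ->]]]].
set z : int := (a^+2 + b^+2 + c^+2 + d * (a + b + c) + d^+2).
have e : qnorm (hq a b c d) = z%:~R by rewrite /qnorm /hq /z /=; field.
have : (0 : rat) <= z%:~R by rewrite -e qnorm_ge0.
rewrite ler0z; case: z e => // n e _.
by exists n; rewrite e.
Qed.

Lemma round_ex (x : rat) : exists r : int, -(1/2) <= x - r%:~R /\ x - r%:~R < 1/2.
Proof.
exists (Num.floor (x + 1/2)).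
have := floor_itv (x + 1/2); rewrite intrD => /andP [h1 h2]; split; lra.
Qed.

Lemma euclid q : exists h, in_O h /\ qnorm (qsub q h) < 1.
Proof.
case: q => x0 x1 x2 x3.
have [r0 [h0 h0']] := round_ex x0; have [r1 [h1 h1']] := round_ex x1.
have [r2 [h2 h2']] := round_ex x2; have [r3 [h3 h3']] := round_ex x3.
have [allh|nall] := boolP [&& x0 - r0%:~R == -(1/2), x1 - r1%:~R == -(1/2),
   x2 - r2%:~R == -(1/2) & x3 - r3%:~R == -(1/2)].
  case/and4P: allh => /eqP e0 /eqP e1 /eqP e2 /eqP e3.
  exists (Quat x0 x1 x2 x3); split; last first.
    by rewrite /qnorm /qsub /qneg /qadd /= !subrr; lra.
  apply/in_OP; exists (r0 - r3), (r1 - r3), (r2 - r3), (2 * r3 - 1).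
  rewrite /hq; congr Quat; rewrite !intrD !intrM ?intrN /=; lra.
exists (Quat r0%:~R r1%:~R r2%:~R r3%:~R); split.
  apply/in_OP; exists (r0 - r3), (r1 - r3), (r2 - r3), (2 * r3); rewrite /hq; by congr Quat; field.
rewrite /qnorm /qsub /qneg /qadd /=.
move: nall h0 h0' h1 h1' h2 h2' h3 h3'.
move: (x0 - r0%:~R) (x1 - r1%:~R) (x2 - r2%:~R) (x3 - r3%:~R) => e0 e1 e2 e3.
move=> nall h0 h0' h1 h1' h2 h2' h3 h3'.
have sw : forall e : rat, -(1/2) <= e -> e < 1/2 -> e ^+ 2 <= 1/4.
  move=> e he he'; nra.
have s0 := sw _ h0 h0'; have s1 := sw _ h1 h1'; have s2 := sw _ h2 h2'; have s3 := sw _ h3 h3'.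
have st : forall e : rat, -(1/2) <= e -> e < 1/2 -> e != -(1/2) -> e ^+ 2 < 1/4.
  move=> e he he' hne; have : -(1/2) < e by rewrite lt_neqAle eq_sym hne he.
  move=> hlt; nra.
have [z0|z0] := eqVneq e0 (-(1/2)); last by have := st _ h0 h0' z0; lra.
have [z1|z1] := eqVneq e1 (-(1/2)); last by have := st _ h1 h1' z1; lra.
have [z2|z2] := eqVneq e2 (-(1/2)); last by have := st _ h2 h2' z2; lra.
have [z3|z3] := eqVneq e3 (-(1/2)); last by have := st _ h3 h3' z3; lra.
by move: nall; rewrite z0 z1 z2 z3 !eqxx.
Qed.

Lemma min_nat (P : nat -> Prop) : (exists n, P n) -> exists n, P n /\ forall m, P m -> (n <= m)%N.
Proof.
move=> [n Pn]; elim/ltn_ind: n Pn => n IH Pn.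
case: (Classical_Prop.classic (exists m, P m /\ (m < n)%N)) => [[m [Pm lt]]|nex].
  exact: IH Pm.
exists n; split=> // m Pm; rewrite leqNgt; apply/negP => lt; apply: nex; by exists m.
Qed.

Lemma qadd0 a : qadd qzero a = a.
Proof. move: a; qdes; rewrite /qadd /qzero /=; congr Quat; ring. Qed.

Lemma principal (I : quat -> Prop) :
  (forall y, I y -> in_O y) ->
  (forall y z, I y -> I z -> I (qsub y z)) ->
  (forall y h, I y -> in_O h -> I (qmul y h)) ->
  forall y0, I y0 -> y0 <> qzero ->
  exists x, I x /\ x <> qzero /\ forall y, I y -> exists h, in_O h /\ y = qmul x h.
Proof.
move=> IO Isub Imul y0 Iy0 y0n0.
have [n [[x [Ix [xn0 nx]]] nmin]] : exists n, (exists x, I x /\ x <> qzero /\ qnorm x = n%:R)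
   /\ forall m, (exists x, I x /\ x <> qzero /\ qnorm x = m%:R) -> (n <= m)%N.
  apply: min_nat; have [n hn] := qnorm_nat _ (IO y0 Iy0); by exists n, y0.
exists x; split=> //; split=> // y Iy.
have n0 : (n%:R : rat) != 0.
  apply/eqP => h; apply: xn0; apply: qnorm_eq0; by rewrite nx h.
set q' := qscale (n%:R)^-1 (qmul (qconj x) y).
have xq : qmul x q' = y.
  rewrite /q' qscale_mul qmulA qmul_conj nx -qscale_rat qscaleA mulVf // qscale1 //.
have [h [Oh hlt]] := euclid q'.
exists h; split=> //.
have Iy' : I (qsub y (qmul x h)) by apply: Isub => //; apply: Imul.
have ey' : qsub y (qmul x h) = qmul x (qsub q' h) by rewrite qmulBr xq.
case: (Classical_Prop.classic (qsub y (qmul x h) = qzero)) => [e0|ne0].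
  by rewrite -(qsub_add y (qmul x h)) e0 qadd0.
have [m hm] := qnorm_nat _ (IO _ Iy').
have := nmin m; have hnm : (m < n)%N.
  rewrite -(ltr_nat rat) -hm ey' qnormM nx.
  have npos : (0 : rat) < n%:R by rewrite lt_neqAle eq_sym n0 ler0n.
  by rewrite -[X in _ < X]mulr1 ltr_pM2l.
move=> h'; have := h' (ex_intro _ _ (conj Iy' (conj ne0 hm))); by rewrite leqNgt hnm.
Qed.

Lemma in_O_one : in_O qone.
Proof. apply/in_OP; exists 1, 0, 0, 0; rewrite /hq /qone; by congr Quat; field. Qed.
Lemma in_O_I : in_O qI.
Proof. apply/in_OP; exists 0, 1, 0, 0; rewrite /hq /qI; by congr Quat; field. Qed.
Lemma in_O_J : in_O qJ.
Proof. apply/in_OP; exists 0, 0, 1, 0; rewrite /hq /qJ; by congr Quat; field. Qed.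
Lemma in_O_omega : in_O qomega.
Proof. by exists 0, 0, 0, 1; rewrite !qcombE /qomega /qscale /qadd /qIJ /qmul /qone /qI /qJ /=; congr Quat; field. Qed.

Set Implicit Arguments. Unset Strict Implicit.

Section Padic.
Variables (p : nat) (K : fieldType) (R : K -> Prop).
Hypothesis hp : padic_field p R.
Hypothesis pp : prime p.

Let pK : K := p%:R.

Lemma R1 : R 1. Proof. by case: hp => [[h1 _] _ _ _ _]. Qed.
Lemma RB x y : R x -> R y -> R (x - y). Proof. by case: hp => [[_ [h _]] _ _ _ _]; apply: h. Qed.
Lemma RM x y : R x -> R y -> R (x * y). Proof. by case: hp => [[_ [_ h]] _ _ _ _]; apply: h. Qed.
Lemma p_neq0 : pK != 0. Proof. by case: hp => _ [h _] _ _ _. Qed.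
Lemma nRpinv : ~ R pK^-1. Proof. by case: hp => _ [_ h] _ _ _. Qed.
Lemma R0 : R 0. Proof. by rewrite -(subrr 1); apply: RB; apply: R1. Qed.
Lemma RN x : R x -> R (- x). Proof. by move=> h; rewrite -sub0r; apply: RB => //; apply: R0. Qed.
Lemma RD x y : R x -> R y -> R (x + y).
Proof. by move=> hx hy; rewrite -(opprK y); apply: RB => //; apply: RN. Qed.
Lemma Rnat n : R n%:R.
Proof. elim: n => [|n IH]; first exact: R0. by rewrite -addn1 natrD; apply: RD => //; apply: R1. Qed.
Lemma Rint (z : int) : R z%:~R.
Proof. case: z => n; first exact: Rnat. rewrite NegzE mulrNz; apply: RN; exact: Rnat. Qed.
Lemma RX x n : R x -> R (x ^+ n).
Proof. move=> hx; elim: n => [|n IH]; first by rewrite expr0; apply: R1. by rewrite exprS; apply: RM. Qed.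
Lemma Rp : R pK. Proof. exact: Rnat. Qed.
Lemma Rsum (I : eqType) (s : seq I) (P : pred I) (F : I -> K) :
  (forall i, R (F i)) -> R (\sum_(i <- s | P i) F i).
Proof. move=> h; apply: (big_ind R) => //; [exact: R0 | exact: RD]. Qed.
Lemma Rsum_cond (I : eqType) (s : seq I) (P : pred I) (F : I -> K) :
  (forall i, P i -> R (F i)) -> R (\sum_(i <- s | P i) F i).
Proof. move=> h; apply: (big_ind R) => //; [exact: R0 | exact: RD]. Qed.
Lemma Rprod (I : eqType) (s : seq I) (P : pred I) (F : I -> K) :
  (forall i, P i -> R (F i)) -> R (\prod_(i <- s | P i) F i).
Proof. move=> h; apply: (big_ind R) => //; [exact: R1 | exact: RM]. Qed.

Lemma Rinv_lem x s t : R x -> R s -> R t -> x * s + pK * t = 1 -> x != 0 /\ R x^-1.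
Proof.
move=> Rx Rs Rt e.
have [x0'|x0] := eqVneq x 0.
  exfalso; apply: nRpinv; move: e; rewrite x0' mul0r add0r => e.
  by have -> : pK^-1 = t by rewrite -[t]mul1r -(mulVf p_neq0) -mulrA e mulr1.
split=> //.
case: hp => _ _ hfac _ _; have [k [u [Ru Rui ex]]] := hfac x x0.
case: k ex => n ex.
  case: n ex => [|n] ex.
    by rewrite ex expr0z mul1r.
  exfalso; apply: nRpinv.
  have -> : pK^-1 = pK ^+ n * u * s + t.
    apply: (mulfI p_neq0); rewrite mulfV ?p_neq0 // -e ex mulrDr !mulrA -exprS.
    by rewrite -exprnP.
  by apply: RD => //; apply: RM => //; apply: RM => //; apply: RX; exact: Rp.
rewrite ex NegzE -exprnN invfM invrK; apply: RM => //; apply: RX; exact: Rp.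
Qed.

Lemma coprime_inv (m : nat) : coprime p m -> (m%:R : K) != 0 /\ R (m%:R)^-1.
Proof.
move=> cpm; have p0 : (0 < p)%N by apply: prime_gt0.
have [a _] := Bezoutl m p0; rewrite (eqP cpm) => /dvdnP [k ek].
apply: (@Rinv_lem _ (- a%:R) k%:R); [exact: Rnat | apply: RN; exact: Rnat | exact: Rnat |].
have : ((1 + a * m)%:R : K) = (k * p)%:R by rewrite ek.
rewrite /pK natrD !natrM => e.
transitivity ((k%:R * p%:R) - a%:R * m%:R : K); first by rewrite /pK; ring.
rewrite -e; ring.
Qed.

Lemma natr_neq0 n : (0 < n)%N -> (n%:R : K) != 0.
Proof.
move=> n0; have [m cpm ->] := pfactor_coprime pp n0.
rewrite natrM mulf_neq0 //; first by case: (@coprime_inv m cpm).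
by rewrite natrX expf_neq0 // p_neq0.
Qed.

Lemma intr_neq0 (z : int) : z != 0 -> (z%:~R : K) != 0.
Proof.
case: z => n; first by rewrite -pmulrn => h; apply: natr_neq0; rewrite lt0n; apply: contra h => /eqP ->.
by move=> _; rewrite NegzE mulrNz -pmulrn oppr_eq0; apply: natr_neq0.
Qed.

Lemma pow_ex x : exists k : nat, R (pK ^+ k * x).
Proof.
have [->|x0] := eqVneq x 0; first by exists 0%N; rewrite mulr0; exact: R0.
case: hp => _ _ hfac _ _; have [k [u [Ru Rui ex]]] := hfac x x0.
case: k ex => n ex.
  by exists 0%N; rewrite expr0 mul1r ex -exprnP; apply: RM => //; apply: RX; exact: Rp.
exists n.+1; rewrite ex NegzE -exprnN mulrA mulfV ?mul1r //.
by rewrite expf_neq0 // p_neq0.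
Qed.

Lemma approx r e : R r -> exists t : nat, R ((r - t%:R) / pK ^+ e).
Proof.
move=> Rr; elim: e => [|e [t Rt]].
  by exists 0%N; rewrite subr0 expr0 divr1.
case: hp => _ _ _ hres _; have [n Rn] := hres _ Rt.
exists (t + n * p ^ e)%N.
have pe : pK ^+ e != 0 by rewrite expf_neq0 // p_neq0.
suff -> : (r - (t + n * p ^ e)%:R) / pK ^+ e.+1 = ((r - t%:R) / pK ^+ e - n%:R) / pK by [].
rewrite natrD natrM natrX -/pK exprS; field.
by rewrite pe p_neq0.
Qed.

Lemma Rmx_mul m n k (A : 'M[K]_(m, n)) (B : 'M[K]_(n, k)) : Rmx R A -> Rmx R B -> Rmx R (A *m B).
Proof. move=> hA hB i j; rewrite mxE; apply: Rsum => l; exact: RM. Qed.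
Lemma Rmx_add m n (A B : 'M[K]_(m, n)) : Rmx R A -> Rmx R B -> Rmx R (A + B).
Proof. move=> hA hB i j; rewrite mxE; exact: RD. Qed.
Lemma Rmx_sub m n (A B : 'M[K]_(m, n)) : Rmx R A -> Rmx R B -> Rmx R (A - B).
Proof. move=> hA hB i j; rewrite !mxE; exact: RB. Qed.
Lemma Rmx_scale m n c (A : 'M[K]_(m, n)) : R c -> Rmx R A -> Rmx R (c *: A).
Proof. move=> hc hA i j; rewrite mxE; exact: RM. Qed.
Lemma Rmx_scalar n c : R c -> Rmx R (c%:M : 'M[K]_n).
Proof. move=> hc i j; rewrite mxE; case: (i == j) => /=; [by rewrite mulr1n | exact: R0]. Qed.
Lemma Rmx_1 n : Rmx R (1%:M : 'M[K]_n).
Proof. apply: Rmx_scalar; exact: R1. Qed.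

Lemma pow_mono k j x : R (pK ^+ k * x) -> R (pK ^+ (k + j) * x).
Proof.
move=> h; have -> : pK ^+ (k + j) * x = pK ^+ j * (pK ^+ k * x) by rewrite exprD; ring.
by apply: RM => //; apply: RX; exact: Rp.
Qed.

Lemma pow_ex_seq (s : seq K) : exists k : nat, forall x, x \in s -> R (pK ^+ k * x).
Proof.
elim: s => [|y s [k hk]]; first by exists 0%N.
have [j hj] := pow_ex y.
exists (k + j)%N => x; rewrite inE => /orP [/eqP ->|xs].
  by rewrite addnC; apply: pow_mono.
by apply: pow_mono; apply: hk.
Qed.

Lemma pow_ex_mx m n (M : 'M[K]_(m, n)) : exists k : nat, Rmx R (pK ^+ k *: M).
Proof.
have [k hk] := pow_ex_seq [seq M ij.1 ij.2 | ij <- enum {: 'I_m * 'I_n}].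
exists k => i j; rewrite mxE; apply: hk.
by apply/mapP; exists (i, j) => //; rewrite mem_enum.
Qed.

Lemma homo_lem (A g : 'M[K]_2) (L : 'cV[K]_2 -> Prop) (c : K) (U1 U2 : 'M[K]_2) :
  c != 0 -> Rmx R U1 -> Rmx R U2 -> (forall v, L v <-> lattice_of R g v) ->
  g = c *: (A *m U2) -> c *: A = g *m U1 ->
  homothetic (mx_image A (std_lattice R)) L.
Proof.
move=> c0 h1 h2 hL eg eA; exists c; split=> // v; rewrite hL; split.
  move=> [u [Ru ->]]; exists (A *m (1%:M *m (U2 *m u))); split.
    exists (1%:M *m (U2 *m u)); split=> //; exists (U2 *m u); split=> //; exact: Rmx_mul.
  by rewrite mul1mx eg -scalemxAl mulmxA.
move=> [w [[w' [[u [Ru ->]] ->]] ->]]; exists (U1 *m u); split; first exact: Rmx_mul.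
by rewrite mul1mx scalemxAl eA mulmxA.
Qed.

Lemma local_data (L : 'cV[K]_2 -> Prop) : is_lattice R L -> exists (g G H : 'M[K]_2) (a e : nat),
 [/\ forall v, L v <-> lattice_of R g v, G = pK ^+ a *: g, Rmx R G, Rmx R H & G *m H = (pK ^+ e)%:M].
Proof.
move=> [g [gu hL]]; have [a ha] := @pow_ex_mx _ _ g; have [e0 he] := @pow_ex_mx _ _ (invmx g).
exists g, (pK ^+ a *: g), (pK ^+ e0 *: invmx g), a, (a + e0)%N; split=> //.
by rewrite -scalemxAl -scalemxAr mulmxV // scalerA -exprD scalemx1.
Qed.

Definition good (n : nat) := (n%:R : K) != 0 /\ R (n%:R)^-1.

Lemma good_prod (I : Type) (s : seq I) (P : pred I) (F : I -> nat) :
  (forall q, P q -> good (F q)) -> good (\prod_(q <- s | P q) F q).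
Proof.
move=> h; apply: (big_ind good) => //.
  by split; rewrite ?invr1 ?oner_neq0 //; exact: R1.
move=> x y [x0 Rx] [y0 Ry]; rewrite /good natrM; split; first by rewrite mulf_neq0.
by rewrite invfM; apply: RM.
Qed.

Lemma good_other q e : prime q -> q != p -> good (q ^ e).
Proof.
move=> pq nqp; apply: coprime_inv; apply: coprimeXr.
by rewrite prime_coprime // dvdn_prime2 // eq_sym.
Qed.

Lemma coord (T : seq nat) (ef tt : nat -> nat) (a : K) : uniq T ->
  (forall q, q \in T -> prime q) -> p \in T -> R a ->
  R ((a / (\prod_(q <- T | q != p) q ^ ef q)%:R - (tt p)%:R) / pK ^+ ef p) ->
  R (((\sum_(q <- T) (\prod_(q' <- T | q' != q) q' ^ ef q') * tt q)%:R - a)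
      / (\prod_(q <- T) q ^ ef q)%:R).
Proof.
move=> uT hpr pT Ra h.
set u := fun q => (\prod_(q' <- T | q' != q) q' ^ ef q')%N.
have hN : forall q, q \in T -> (\prod_(q <- T) q ^ ef q = u q * q ^ ef q)%N.
  by move=> q qT; rewrite (bigD1_seq q) //= mulnC.
have gu : good (u p).
  rewrite /u big_seq_cond; apply: good_prod => q /andP [qT nqp].
  exact: good_other (hpr q qT) nqp.
have pe : pK ^+ ef p != 0 by rewrite expf_neq0 // p_neq0.
rewrite (bigD1_seq p) //= natrD.
have split : forall x y z w : K, (x + y - z) / w = (x - z) / w + y / w by move=> *; ring.
rewrite split; apply: RD.
  move: h; case: gu => u0 Ru.
  rewrite (hN p pT).
  have -> : ((u p * tt p)%:R - a) / (u p * p ^ ef p)%:R =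
     - ((a / (u p)%:R - (tt p)%:R) / pK ^+ ef p).
    rewrite !natrM natrX -/pK; field; by rewrite u0 pe.
  exact: RN.
rewrite natr_sum mulr_suml big_seq_cond; apply: Rsum_cond => q /andP [qT nqp].
rewrite (hN q qT) natrM natrM natrX.
have [q0 Rq] := @good_other q (ef q) (hpr q qT) nqp.
have u0 : ((u q)%:R : K) != 0.
  apply: natr_neq0; rewrite /u big_seq_cond; apply: prodn_cond_gt0 => q' /andP [q'T _].
  by rewrite expn_gt0 prime_gt0 // hpr.
have -> : (u q)%:R * (tt q)%:R / ((u q)%:R * (q%:R : K) ^+ ef q) = (tt q)%:R * ((q ^ ef q)%:R)^-1.
  have qn0 : (q%:R : K) != 0 by apply: natr_neq0; exact: prime_gt0 (hpr q qT).
  rewrite natrX; field; by rewrite u0 expf_neq0.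
by apply: RM => //; exact: Rnat.
Qed.
End Padic.

Section Iota.
Variables (p : nat) (K : fieldType) (R : K -> Prop) (iota : quat -> 'M[K]_2).
Hypothesis hp : padic_field p R.
Hypothesis pp : prime p.
Hypothesis hsi : split_iso R iota.

Lemma iota1 : iota qone = 1. Proof. by case: hsi => h _ _ _ _. Qed.
Lemma iotaD x y : iota (qadd x y) = iota x + iota y. Proof. by case: hsi => _ h _ _ _; apply: h. Qed.
Lemma iotaM x y : iota (qmul x y) = iota x * iota y. Proof. by case: hsi => _ _ h _ _; apply: h. Qed.
Lemma iotaO x : in_O x -> Rmx R (iota x). Proof. by case: hsi => _ _ _ h _; apply: h. Qed.
Lemma iota_surj (M : 'M[K]_2) : Rmx R M -> exists a b c d, [/\ R a, R b, R c & R d] /\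
           M = a *: iota qone + b *: iota qI + c *: iota qJ + d *: iota qomega.
Proof. by case: hsi => _ _ _ _ h; apply: h. Qed.

Lemma iota0 : iota qzero = 0.
Proof.
have : iota (qadd qzero qzero) = iota qzero + iota qzero.
  exact: iotaD.
have -> : qadd qzero qzero = qzero by rewrite /qadd /qzero /=; congr Quat; ring.
by move=> h; apply: (@addrI _ (iota qzero)); rewrite addr0 -h.
Qed.

Lemma iotaN x : iota (qneg x) = - iota x.
Proof.
apply/eqP; rewrite -subr_eq0 opprK -iotaD.
have -> : qadd (qneg x) x = qzero by case: x => *; rewrite /qadd /qneg /qzero /=; congr Quat; ring.
by rewrite iota0.
Qed.

Lemma iotaB x y : iota (qsub x y) = iota x - iota y.
Proof. by rewrite /qsub iotaD iotaN. Qed.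

Lemma iota_natscale (n : nat) x : iota (qscale n%:R x) = n%:R *: iota x.
Proof.
elim: n => [|n IH].
  have -> : qscale 0%:R x = qzero by case: x => *; rewrite /qscale /qzero /=; congr Quat; ring.
  by rewrite iota0 scale0r.
have -> : forall y, qscale n.+1%:R y = qadd (qscale n%:R y) y.
  by case=> *; rewrite /qscale /qadd /=; congr Quat; rewrite -addn1 natrD; ring.
by rewrite iotaD IH mulrSr scalerDl scale1r.
Qed.

Lemma iota_intscale (z : int) x : iota (qscale z%:~R x) = z%:~R *: iota x.
Proof.
case: z => n; first by rewrite -!pmulrn iota_natscale.
have -> : qscale (Negz n)%:~R x = qneg (qscale n.+1%:R x).
  by case: x => *; rewrite /qscale /qneg /= NegzE mulrNz -pmulrn; congr Quat; ring.
by rewrite iotaN iota_natscale NegzE mulrNz -pmulrn scaleNr.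
Qed.

Lemma iota_qcomb (a b c d : int) : iota (qcomb a%:~R b%:~R c%:~R d%:~R) =
  a%:~R *: iota qone + b%:~R *: iota qI + c%:~R *: iota qJ + d%:~R *: iota qomega.
Proof. by rewrite /qcomb !iotaD !iota_intscale addrA. Qed.

Lemma iota_rat_int (z : int) : iota (qrat z%:~R) = (z%:~R : K)%:M.
Proof.
have -> : qrat z%:~R = qscale z%:~R qone by rewrite /qrat /qscale /qone /=; congr Quat; ring.
by rewrite iota_intscale iota1 scalemx1.
Qed.

Lemma iota_ratscale (z : rat) : z != 0 -> exists s : K, s != 0 /\ forall x, iota (qscale z x) = s *: iota x.
Proof.
move=> z0.
have dn : ((denq z)%:~R : K) != 0 by apply: (@intr_neq0 p K R hp pp); rewrite denq_neq0.
have nn : ((numq z)%:~R : K) != 0 by apply: (@intr_neq0 p K R hp pp); rewrite numq_eq0.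
exists ((numq z)%:~R / (denq z)%:~R); split; first by rewrite mulf_neq0 // invr_eq0.
move=> x; rewrite qscale_rat iotaM.
have e : iota (qrat z) * iota (qrat (denq z)%:~R) = iota (qrat (numq z)%:~R).
  by rewrite -iotaM qrat_mul -numqE.
have -> : iota (qrat z) = ((numq z)%:~R / (denq z)%:~R)%:M.
  move: e; rewrite !iota_rat_int => e.
  have -> : iota (qrat z) = iota (qrat z) *m (((denq z)%:~R : K)%:M *m (((denq z)%:~R : K)^-1)%:M).
    by rewrite -scalar_mxM mulfV // mulmx1.
  by rewrite mulmxA mulmxE e -mulmxE -scalar_mxM.
by rewrite -mulmxE mul_scalar_mx.
Qed.
End Iota.

Unset Implicit Arguments. Set Strict Implicit.

Lemma dvd_mS (S : seq nat) q : q \in S -> (q %| mS S)%N.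
Proof. move=> qS; rewrite /mS (big_rem q) //=; exact: dvdn_mulr. Qed.

Lemma dvd_prod_mS (S T : seq nat) (e : nat -> nat) : (forall q, q \in T -> q \in S) ->
  (\prod_(q <- T) q ^ e q %| mS S ^ (\sum_(q <- T) e q))%N.
Proof.
elim: T => [|q T IH] h; first by rewrite big_nil.
rewrite !big_cons expnD; apply: dvdn_mul.
  apply: dvdn_exp2r; apply: dvd_mS; apply: h; exact: mem_head.
apply: IH => q' q'T; apply: h; by rewrite inE q'T orbT.
Qed.

Lemma in_ZS_int S (z : int) : in_ZS S z%:~R.
Proof. by exists 0%N, z; rewrite expn0 divr1. Qed.

Lemma in_ZS_div S (z : int) (n k : nat) : (0 < mS S ^ k)%N -> (n %| mS S ^ k)%N ->
  in_ZS S (z%:~R / n%:R).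
Proof.
move=> pos /dvdnP [m em]; exists k, (z * m%:Z); rewrite em.
have m0 : (m%:R : rat) != 0 by rewrite pnatr_eq0; apply/eqP => m0; move: pos; rewrite em m0.
rewrite natrM intrM -pmulrn; field.
apply/andP; split => //; rewrite pnatr_eq0; apply/eqP => n0; move: pos; by rewrite em n0 muln0.
Qed.

Lemma qscale_comb r a b c d : qscale r (qcomb a b c d) = qcomb (r * a) (r * b) (r * c) (r * d).
Proof. rewrite !qcombE /qscale /=; by congr Quat; field. Qed.

Lemma qnorm_rat r : qnorm (qrat r) = r ^+ 2.
Proof. rewrite /qnorm /qrat /=; ring. Qed.

Theorem theorem2p1 (S : seq nat) (K : nat -> fieldType) (R : forall p, K p -> Prop)
    (iota : forall p, quat -> 'M[K p]_2) :
  (forall p, p \in S -> prime p) ->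
  (forall p, p \in S -> odd p -> padic_field p (R p)) ->
  (forall p, p \in S -> odd p -> split_iso (R p) (iota p)) ->
  forall L : forall p, 'cV[K p]_2 -> Prop,
    (forall p, p \in S -> odd p -> is_lattice (R p) (L p)) ->
    exists gamma, in_Gamma S gamma /\
      forall p, p \in S -> odd p ->
        homothetic (mx_image (iota p gamma) (std_lattice (R p))) (L p) /\
        (* the class of gamma in Gamma_S / Z_S^* acts the same way *)
        forall z : rat, z != 0 -> in_ZS S z -> in_ZS S z^-1 ->
          homothetic (mx_image (iota p (qscale z gamma)) (std_lattice (R p))) (L p).
Proof.
move=> hprime hpad hsi L hlat.
set T := [seq q <- undup S | odd q].
have memT q : (q \in T) = (q \in S) && odd q by rewrite mem_filter mem_undup andbC.
have uT : uniq T by rewrite filter_uniq // undup_uniq.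
have TS q : q \in T -> q \in S /\ odd q by rewrite memT => /andP.
have Tpr q : q \in T -> prime q by move=> /TS [qS _]; exact: hprime.
have D1ex : forall p, exists d : 'M[K p]_2 * 'M[K p]_2 * 'M[K p]_2 * nat * nat,
   p \in T -> [/\ forall v, L p v <-> lattice_of (R p) d.1.1.1.1 v,
       d.1.1.1.2 = (p%:R : K p) ^+ d.1.2 *: d.1.1.1.1, Rmx (R p) d.1.1.1.2,
       Rmx (R p) d.1.1.2 & d.1.1.1.2 *m d.1.1.2 = ((p%:R : K p) ^+ d.2)%:M].
  move=> p; case pT: (p \in T); last by exists (0, 0, 0, 0%N, 0%N).
  have [pS po] := TS p pT.
  have [g [G [H [a [e h]]]]] :=
    @local_data p (K p) (R p) (hpad p pS po) (L p) (hlat p pS po).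
  by exists (g, G, H, a, e).
have [d1 hd1] : exists d1 : forall p, 'M[K p]_2 * 'M[K p]_2 * 'M[K p]_2 * nat * nat,
   forall p, p \in T -> [/\ forall v, L p v <-> lattice_of (R p) (d1 p).1.1.1.1 v,
       (d1 p).1.1.1.2 = (p%:R : K p) ^+ (d1 p).1.2 *: (d1 p).1.1.1.1, Rmx (R p) (d1 p).1.1.1.2,
       Rmx (R p) (d1 p).1.1.2 & (d1 p).1.1.1.2 *m (d1 p).1.1.2 = ((p%:R : K p) ^+ (d1 p).2)%:M].
  exists (fun p => proj1_sig (constructive_indefinite_description _ (D1ex p))) => p.
  exact: proj2_sig (constructive_indefinite_description _ (D1ex p)).
clear D1ex.
have [gf [Gf [Hf [af [ef {}hd1]]]]] : exists (gf Gf Hf : forall p, 'M[K p]_2) (af ef : nat -> nat),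
   forall p, p \in T -> [/\ forall v, L p v <-> lattice_of (R p) (gf p) v,
       Gf p = (p%:R : K p) ^+ af p *: gf p, Rmx (R p) (Gf p),
       Rmx (R p) (Hf p) & Gf p *m Hf p = ((p%:R : K p) ^+ ef p)%:M].
  by exists (fun p => (d1 p).1.1.1.1), (fun p => (d1 p).1.1.1.2), (fun p => (d1 p).1.1.2),
     (fun p => (d1 p).1.2), (fun p => (d1 p).2).
clear d1.
pose u q := (\prod_(q' <- T | q' != q) q' ^ ef q')%N.
pose N := (\prod_(q <- T) q ^ ef q)%N.
have hN q : q \in T -> N = (u q * q ^ ef q)%N by move=> qT; rewrite /N (bigD1_seq q) //= mulnC.
have Npos : (0 < N)%N.
  by rewrite /N big_seq; apply: prodn_cond_gt0 => q qT; rewrite expn_gt0 prime_gt0 // Tpr.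
have gu : forall p, p \in T -> good (R p) (u p).
  move=> p pT; have [pS po] := TS p pT.
  rewrite /u big_seq_cond; apply: (good_prod (hpad p pS po)) => q /andP [qT nqp].
  exact: (good_other (hpad p pS po) (hprime p pS) (ef q) (Tpr q qT) nqp).
have E2 : forall p, exists t : nat * nat * nat * nat, p \in T -> exists a0 a1 a2 a3 : K p,
   [/\ R p a0, R p a1, R p a2 & R p a3] /\
   Gf p = a0 *: iota p qone + a1 *: iota p qI + a2 *: iota p qJ + a3 *: iota p qomega /\
   [/\ R p ((a0 / (u p)%:R - t.1.1.1%:R) / (p%:R : K p) ^+ ef p),
       R p ((a1 / (u p)%:R - t.1.1.2%:R) / (p%:R : K p) ^+ ef p),
       R p ((a2 / (u p)%:R - t.1.2%:R) / (p%:R : K p) ^+ ef p) &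
       R p ((a3 / (u p)%:R - t.2%:R) / (p%:R : K p) ^+ ef p)].
  move=> p; case pT: (p \in T); last by exists (0,0,0,0)%N.
  have [pS po] := TS p pT; have hp := hpad p pS po.
  have [_ _ RG _ _] := hd1 p pT.
  have [a0 [a1 [a2 [a3 [[Ra0 Ra1 Ra2 Ra3] eG]]]]] := iota_surj (hsi p pS po) RG.
  have [_ Ru] := gu p pT.
  have [t0 h0] := approx hp (ef p) (RM hp Ra0 Ru).
  have [t1 h1] := approx hp (ef p) (RM hp Ra1 Ru).
  have [t2 h2] := approx hp (ef p) (RM hp Ra2 Ru).
  have [t3 h3] := approx hp (ef p) (RM hp Ra3 Ru).
  by exists (t0, t1, t2, t3) => _; exists a0, a1, a2, a3.
have [t0f [t1f [t2f [t3f ht]]]] : exists t0f t1f t2f t3f : nat -> nat, forall p, p \in T ->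
   exists a0 a1 a2 a3 : K p,
   [/\ R p a0, R p a1, R p a2 & R p a3] /\
   Gf p = a0 *: iota p qone + a1 *: iota p qI + a2 *: iota p qJ + a3 *: iota p qomega /\
   [/\ R p ((a0 / (u p)%:R - (t0f p)%:R) / (p%:R : K p) ^+ ef p),
       R p ((a1 / (u p)%:R - (t1f p)%:R) / (p%:R : K p) ^+ ef p),
       R p ((a2 / (u p)%:R - (t2f p)%:R) / (p%:R : K p) ^+ ef p) &
       R p ((a3 / (u p)%:R - (t3f p)%:R) / (p%:R : K p) ^+ ef p)].
  pose tf p := proj1_sig (constructive_indefinite_description _ (E2 p)).
  exists (fun p => (tf p).1.1.1), (fun p => (tf p).1.1.2), (fun p => (tf p).1.2), (fun p => (tf p).2).
  move=> p; exact: proj2_sig (constructive_indefinite_description _ (E2 p)).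
clear E2.
pose A0 := (\sum_(q <- T) u q * t0f q)%N.
pose A1 := (\sum_(q <- T) u q * t1f q)%N.
pose A2 := (\sum_(q <- T) u q * t2f q)%N.
pose A3 := (\sum_(q <- T) u q * t3f q)%N.
pose y := qcomb (Posz A0)%:~R (Posz A1)%:~R (Posz A2)%:~R (Posz A3)%:~R.
have Yfact : forall p, p \in T -> exists D, Rmx (R p) D /\ iota p y = Gf p + N%:R *: D.
  move=> p pT; have [pS po] := TS p pT; have hp := hpad p pS po; have pp := hprime p pS.
  have hs := hsi p pS po.
  have [a0 [a1 [a2 [a3 [[Ra0 Ra1 Ra2 Ra3] [eG [h0 h1 h2 h3]]]]]]] := ht p pT.
  have c0 : R p ((A0%:R - a0) / N%:R) := coord hp pp uT Tpr pT Ra0 h0.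
  have c1 : R p ((A1%:R - a1) / N%:R) := coord hp pp uT Tpr pT Ra1 h1.
  have c2 : R p ((A2%:R - a2) / N%:R) := coord hp pp uT Tpr pT Ra2 h2.
  have c3 : R p ((A3%:R - a3) / N%:R) := coord hp pp uT Tpr pT Ra3 h3.
  exists (((A0%:R - a0) / N%:R) *: iota p qone + ((A1%:R - a1) / N%:R) *: iota p qI
        + ((A2%:R - a2) / N%:R) *: iota p qJ + ((A3%:R - a3) / N%:R) *: iota p qomega).
  split.
    apply: (Rmx_add hp); [apply: (Rmx_add hp); [apply: (Rmx_add hp)|]|];
    apply: (Rmx_scale hp) => //; apply: (iotaO hs);
    [exact: in_O_one | exact: in_O_I | exact: in_O_J | exact: in_O_omega].
  have N0 : (N%:R : K p) != 0 by apply: (natr_neq0 hp pp).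
  rewrite /y (iota_qcomb hs) eG; apply/matrixP => i j; rewrite !mxE -!pmulrn; field.
  exact: N0.
pose inI y := in_O y /\ forall p, p \in T -> exists U, Rmx (R p) U /\ iota p y = Gf p *m U.
have Isub : forall y z, inI y -> inI z -> inI (qsub y z).
  move=> y1 z [Oy hy] [Oz hz]; split; first exact: in_O_sub.
  move=> p pT; have [pS po] := TS p pT.
  have [U [RU eU]] := hy p pT; have [V [RV eV]] := hz p pT.
  exists (U - V); split; first exact: (Rmx_sub (hpad p pS po)).
  by rewrite (iotaB (hsi p pS po)) eU eV mulmxBr.
have Imul : forall y h, inI y -> in_O h -> inI (qmul y h).
  move=> y1 h [Oy hy] Oh; split; first exact: in_O_mul.
  move=> p pT; have [pS po] := TS p pT.
  have [U [RU eU]] := hy p pT.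
  exists (U *m iota p h); split.
    apply: (Rmx_mul (hpad p pS po)) => //; exact: (iotaO (hsi p pS po)).
  by rewrite (iotaM (hsi p pS po)) eU -mulmxE mulmxA.
pose Nq := qrat (Posz N)%:~R.
have INq : inI Nq.
  split; first exact: in_O_int.
  move=> p pT; have [pS po] := TS p pT; have hp := hpad p pS po.
  have [_ _ _ RH eGH] := hd1 p pT.
  exists ((u p)%:R *: Hf p); split; first by apply: (Rmx_scale hp) => //; exact: (Rnat hp).
  rewrite (iota_rat_int (hsi p pS po)) -scalemxAr eGH scale_scalar_mx; congr scalar_mx.
  by rewrite -pmulrn (hN p pT) natrM natrX.
have Nq0 : Nq <> qzero.
  move=> e; have : q0 Nq = 0 by rewrite e.
  rewrite /= => /eqP; rewrite intr_eq0 => /eqP [] N0; by move: Npos; rewrite N0.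
have [x [Ix [xn0 hdiv]]] := @principal inI (fun y1 h => proj1 h) Isub Imul Nq INq Nq0.
have Iy : inI y.
  split; first by exists (Posz A0), (Posz A1), (Posz A2), (Posz A3).
  move=> p pT; have [pS po] := TS p pT; have hp := hpad p pS po.
  have [_ _ RG RH eGH] := hd1 p pT.
  have [D [RD eY]] := Yfact p pT.
  exists (1%:M + ((u p)%:R *: Hf p) *m D); split.
    apply: (Rmx_add hp); first exact: (Rmx_1 hp).
    apply: (Rmx_mul hp) => //; apply: (Rmx_scale hp) => //; exact: (Rnat hp).
  rewrite eY mulmxDr mulmx1 mulmxA -scalemxAr eGH scale_scalar_mx mul_scalar_mx.
  by congr (_ + _ *: _); rewrite (hN p pT) natrM natrX.
have [hy [Ohy ey]] := hdiv y Iy.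
have [hn [Ohn en]] := hdiv Nq INq.
have iNq : forall p, p \in T -> iota p Nq = (N%:R : K p)%:M.
  move=> p pT; have [pS po] := TS p pT.
  by rewrite (iota_rat_int (hsi p pS po)) -pmulrn.
exists x; split; last first.
  move=> p pS po; have pT : p \in T by rewrite memT pS po.
  have hp := hpad p pS po; have pp := hprime p pS; have hs := hsi p pS po.
  have [hL eG RG RH eGH] := hd1 p pT.
  have [U1 [RU1 eU1]] := Ix.2 p pT.
  have [D [RD eY]] := Yfact p pT.
  pose U2 := iota p hy - iota p hn *m D.
  have RU2 : Rmx (R p) U2.
    apply: (Rmx_sub hp); first exact: (iotaO hs).
    by apply: (Rmx_mul hp) => //; exact: (iotaO hs).
  have eGx : Gf p = iota p x *m U2.
    have e1 : iota p y = iota p x *m iota p hy by rewrite ey (iotaM hs) mulmxE.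
    have e2 : iota p Nq = iota p x *m iota p hn by rewrite en (iotaM hs) mulmxE.
    have e3 : N%:R *: D = iota p x *m (iota p hn *m D).
      by rewrite mulmxA -e2 iNq // mul_scalar_mx.
    by rewrite /U2 mulmxBr -e3 -e1 eY addrK.
  have pa0 : ((p%:R : K p) ^+ af p) != 0 by rewrite expf_neq0 // (natr_neq0 hp pp) // prime_gt0.
  set c := ((p%:R : K p) ^+ af p)^-1.
  have c0 : c != 0 by rewrite invr_eq0.
  have eg : gf p = c *: (iota p x *m U2) by rewrite -eGx eG scalerA mulVf // scale1r.
  have eA : c *: iota p x = gf p *m U1.
    by rewrite eU1 scalemxAl eG scalerA mulVf // scale1r.
  split; first exact: (homo_lem hp c0 RU1 RU2 hL eg eA).
  move=> z z0 _ _.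
  have [s [s0 hs']] := iota_ratscale hp pp hs z0.
  rewrite hs'.
  have cs0 : c / s != 0 by rewrite mulf_neq0 // invr_eq0.
  apply: (homo_lem hp cs0 RU1 RU2 hL).
    by rewrite -scalemxAl scalerA divfK.
  by rewrite scalerA divfK.
have [n hnx] := qnorm_nat x Ix.1.
have [m hm] := qnorm_nat hn Ohn.
have nm : (n * m = N ^ 2)%N.
  apply/eqP; rewrite -(eqr_nat rat) natrM natrX -hnx -hm -qnormM -en /Nq qnorm_rat.
  by rewrite -pmulrn.
have n0 : (n%:R : rat) != 0.
  apply/eqP => e; apply: xn0; apply: qnorm_eq0; by rewrite hnx e.
have npos : (0 < n)%N by rewrite lt0n; apply: contra n0 => /eqP ->.
have mSpos : forall k, (0 < mS S ^ k)%N.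
  move=> k; rewrite expn_gt0 /mS big_seq; apply/orP; left.
  by apply: prodn_cond_gt0 => q qS; apply: prime_gt0; apply: hprime.
set E := (\sum_(q <- T) ef q)%N.
have ndvd : (n %| mS S ^ (E * 2))%N.
  apply: (@dvdn_trans (N ^ 2)); first by rewrite -nm dvdn_mulr.
  rewrite expnM; apply: dvdn_exp2r; apply: dvd_prod_mS => q qT; by case: (TS q qT).
have [a [b [c [d ex]]]] := Ix.1.
split.
  exists a%:~R, b%:~R, c%:~R, d%:~R; split=> //; split; exact: in_ZS_int.
exists (qscale (n%:R)^-1 (qconj x)); split.
  have [a' [b' [c' [d' ex']]]] := in_O_conj _ Ix.1.
  rewrite ex' qscale_comb.
  exists ((n%:R)^-1 * a'%:~R), ((n%:R)^-1 * b'%:~R), ((n%:R)^-1 * c'%:~R), ((n%:R)^-1 * d'%:~R).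
  split=> //; split; rewrite mulrC; exact: (in_ZS_div _ _ _ _ (mSpos _) ndvd).
split.
  rewrite qscale_mul qmul_conj hnx /qrat /qscale /qone /=; congr Quat; field => //.
rewrite qscale_mull qconj_mul hnx /qrat /qscale /qone /=; congr Quat; field => //.
Qed.
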